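(* Fix a task $(\mathcal{S},\mathcal{A},\_,d_0,\mathcal{R},\gamma)$. For every transition model $\mathcal{T}$ (such that all states are reachable) and every $c\in\mathbb{R}$, the level set $\{\pi\in\Pi^+ : J_{\mathcal{T}}(\pi)=c\}$ is connected.
   Context: Setting: finite $\mathcal{S}$, finite $\mathcal{A}$ with $|\mathcal{A}|>1$, $d_0\in\Delta(\mathcal{S})$, $\mathcal{R}:\mathcal{S}\times\mathcal{A}\to\mathbb{R}$, $\gamma\in[0,1)$; a task is an MDP without its transition model, and all states are assumed reachable from $d_0$ under $\mathcal{T}$. Stationary policies $\pi:\mathcal{S}\to\Delta(\mathcal{A})$ are identified with $\Delta(\mathcal{A})^{|\mathcal{S}|}\subset\mathbb{R}^{\mathcal{S}\times\mathcal{A}}$; $\Pi^+$ is the set of those with $\pi(a\mid s)>0$ for all $s,a$. $J_{\mathcal{T}}(\pi)=\mathbb{E}\big[\sum_{t\ge0}\gamma^t\mathcal{R}(s_t,a_t)\big]$ with $s_0\sim d_0$, $a_t\sim\pi(\cdot\mid s_t)$, $s_{t+1}\sim\mathcal{T}(\cdot\mid s_t,a_t)$. *)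

(* Defs.v *)
From HB Require Import structures.
From mathcomp Require Import all_boot all_order all_algebra.
From mathcomp Require Import all_classical all_reals all_analysis.
Set Implicit Arguments. Unset Strict Implicit. Unset Printing Implicit Defensive.
Import Order.TTheory GRing.Theory Num.Theory.
Local Open Scope ring_scope.

(* States are 'I_n, actions are 'I_m.  Policies are matrices pi : 'M[R]_(n,m),
   pi s a = pi(a|s), i.e. elements of R^{S x A}. *)

Definition is_dist (R : realType) (n : nat) (d : 'I_n -> R) : Prop :=
  (forall s, 0 <= d s) /\ \sum_(s < n) d s = 1.

Definition is_transition (R : realType) (n m : nat)
  (T : 'I_n -> 'I_m -> 'I_n -> R) : Prop :=
  forall s a, is_dist (T s a).

Definition is_pos_policy (R : realType) (n m : nat) (pi : 'M[R]_(n, m)) : Prop :=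
  (forall s a, 0 < pi s a) /\ (forall s, \sum_(a < m) pi s a = 1).

Definition all_reachable (R : realType) (n m : nat) (d0 : 'I_n -> R)
  (T : 'I_n -> 'I_m -> 'I_n -> R) : Prop :=
  forall s : 'I_n, exists s0 : 'I_n,
    0 < d0 s0 /\ connect (fun x y : 'I_n => [exists a : 'I_m, 0 < T x a y]) s0 s.

Definition Ppi (R : realType) (n m : nat) (T : 'I_n -> 'I_m -> 'I_n -> R)
  (pi : 'M[R]_(n, m)) : 'M[R]_n :=
  \matrix_(s, s') \sum_(a < m) pi s a * T s a s'.

Definition exp_reward_t (R : realType) (n m : nat) (d0 : 'I_n -> R)
  (Rw : 'I_n -> 'I_m -> R) (T : 'I_n -> 'I_m -> 'I_n -> R)
  (pi : 'M[R]_(n, m)) (t : nat) : R :=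
  let dt := (\row_s d0 s) *m (Ppi T pi) ^+ t in
  \sum_(s < n) dt 0 s * \sum_(a < m) pi s a * Rw s a.

Definition J (R : realType) (n m : nat) (d0 : 'I_n -> R)
  (Rw : 'I_n -> 'I_m -> R) (gamma : R) (T : 'I_n -> 'I_m -> 'I_n -> R)
  (pi : 'M[R]_(n, m)) : R :=
  limn (fun N => \sum_(0 <= t < N) gamma ^+ t * exp_reward_t d0 Rw T pi t).

(* Main.v *)
Require Import Defs.
From HB Require Import structures.
From mathcomp Require Import all_boot all_order all_algebra.
From mathcomp Require Import all_classical all_reals all_analysis.
From mathcomp Require Import ring lra.
Import Order.TTheory GRing.Theory Num.Theory.
Import numFieldNormedType.Exports.
Local Open Scope classical_set_scope.
Local Open Scope ring_scope.
Set Implicit Arguments. Unset Strict Implicit. Unset Printing Implicit Defensive.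

Definition stoch (R : realType) (n : nat) (A : 'M[R]_n) : Prop :=
  (forall i j, 0 <= A i j) /\ (forall i, \sum_j A i j = 1).

Lemma stoch1 (R : realType) (n : nat) : stoch (1%:M : 'M[R]_n).
Proof.
split=> [i j|i]; first by rewrite mxE; case: (i == j).
rewrite (bigD1 i) //= mxE eqxx big1 ?addr0 // => j /negbTE; rewrite mxE eq_sym => ->//.
Qed.

Lemma stoch_mul (R : realType) (n : nat) (A B : 'M[R]_n) :
  stoch A -> stoch B -> stoch (A *m B).
Proof.
move=> [A0 A1] [B0 B1]; split=> [i j|i].
  by rewrite mxE; apply: sumr_ge0 => k _; apply: mulr_ge0.
under eq_bigr => j _ do rewrite mxE.
rewrite exchange_big /=; rewrite -[RHS](A1 i); apply: eq_bigr => k _.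
by rewrite -mulr_sumr B1 mulr1.
Qed.

Lemma stoch_exp (R : realType) (n : nat) (A : 'M[R]_n) k :
  stoch A -> stoch (A ^+ k).
Proof.
move=> sA; elim: k => [|k IH]; first by rewrite expr0; exact: stoch1.
by rewrite exprSr; exact: (stoch_mul IH sA).
Qed.

Lemma stoch_le1 (R : realType) (n : nat) (A : 'M[R]_n) i j :
  stoch A -> A i j <= 1.
Proof.
move=> [A0 A1]; rewrite -(A1 i) (bigD1 j) //= lerDl.
by apply: sumr_ge0 => k _.
Qed.

Lemma Ppi_stoch (R : realType) (n m : nat) (T : 'I_n -> 'I_m -> 'I_n -> R)
  (pi : 'M[R]_(n, m)) :
  is_transition T -> (forall s a, 0 <= pi s a) -> (forall s, \sum_(a < m) pi s a = 1) ->
  stoch (Ppi T pi).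
Proof.
move=> hT p0 p1; split=> [i j|i].
  rewrite mxE; apply: sumr_ge0 => a _; apply: mulr_ge0 => //.
  by case: (hT i a).
under eq_bigr => j _ do rewrite mxE.
rewrite exchange_big /= -[RHS](p1 i); apply: eq_bigr => a _.
by rewrite -mulr_sumr; case: (hT i a) => _ ->; rewrite mulr1.
Qed.

Definition Fv (R : realType) (n : nat) (r : 'I_n -> R) (v : 'rV[R]_n) : R :=
  \sum_s v 0 s * r s.

Lemma FvD (R : realType) (n : nat) (r : 'I_n -> R) u v : Fv r (u + v) = Fv r u + Fv r v.
Proof. by rewrite /Fv -big_split; apply: eq_bigr => s _; rewrite mxE mulrDl. Qed.

Lemma FvZ (R : realType) (n : nat) (r : 'I_n -> R) k v : Fv r (k *: v) = k * Fv r v.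
Proof. by rewrite /Fv mulr_sumr; apply: eq_bigr => s _; rewrite mxE mulrA. Qed.

Lemma series_id (R : realType) (n : nat) (r : 'I_n -> R) (d mu : 'rV[R]_n)
  (P : 'M[R]_n) (g : R) :
  mu = d + g *: (mu *m P) -> forall N,
  Fv r mu = \sum_(0 <= t < N) g ^+ t * Fv r (d *m P ^+ t) + g ^+ N * Fv r (mu *m P ^+ N).
Proof.
move=> hmu; elim=> [|N IH]; first by rewrite big_nil add0r expr0 mul1r mulmx1.
rewrite IH big_nat_recr //= -addrA; congr (_ + _).
have -> : mu *m P ^+ N = d *m P ^+ N + g *: (mu *m P ^+ N.+1).
  by rewrite {1}hmu mulmxDl -scalemxAl -mulmxA exprS.
by rewrite FvD FvZ mulrDr [g ^+ N.+1]exprSr mulrA.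
Qed.

Lemma Fv_bound (R : realType) (n : nat) (r : 'I_n -> R) (mu : 'rV[R]_n)
  (P : 'M[R]_n) : stoch P -> forall N,
  `|Fv r (mu *m P ^+ N)| <= \sum_s (\sum_i `|mu 0 i|) * `|r s|.
Proof.
move=> sP N; have [Q0 Q1] := stoch_exp N sP.
apply: le_trans (ler_norm_sum _ _ _) _; apply: ler_sum => s _.
rewrite normrM ler_wpM2r // mxE; apply: le_trans (ler_norm_sum _ _ _) _.
apply: ler_sum => i _; rewrite normrM (ger0_norm (Q0 _ _)).
rewrite -[leRHS]mulr1 ler_wpM2l //; exact: stoch_le1.
Qed.

Definition rpi (R : realType) (n m : nat) (Rw : 'I_n -> 'I_m -> R) (pi : 'M[R]_(n, m))
  : 'I_n -> R := fun s => \sum_(a < m) pi s a * Rw s a.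

Lemma J_eq (R : realType) (n m : nat) (d0 : 'I_n -> R) (Rw : 'I_n -> 'I_m -> R)
  (g : R) (T : 'I_n -> 'I_m -> 'I_n -> R) (pi : 'M[R]_(n, m)) (mu : 'rV[R]_n) :
  0 <= g -> g < 1 -> stoch (Ppi T pi) ->
  mu = (\row_s d0 s) + g *: (mu *m Ppi T pi) ->
  J d0 Rw g T pi = Fv (rpi Rw pi) mu.
Proof.
move=> g0 g1 sP hmu; rewrite /J; apply: cvg_lim => //.
pose K := \sum_s (\sum_i `|mu 0 i|) * `|rpi Rw pi s|.
pose L := Fv (rpi Rw pi) mu.
have hid := series_id (rpi Rw pi) hmu.
have hb := Fv_bound (rpi Rw pi) mu sP.
have gK : (fun N => g ^+ N * K) @ \oo --> 0.
  rewrite -(mul0r K); apply: cvgM; last exact: cvg_cst.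
  by apply: cvg_expr; rewrite ger0_norm.
have hex : forall t, exp_reward_t d0 Rw T pi t = Fv (rpi Rw pi) ((\row_s d0 s) *m Ppi T pi ^+ t).
  by [].
apply: (@squeeze_cvgr _ _ _ _ (fun N => L - g ^+ N * K) (fun N => L + g ^+ N * K)).
- apply: nearW => N; under eq_bigr => t _ do rewrite hex.
  have := hid N; rewrite -/L => ->.
  have hN := hb N.
  have gN : 0 <= g ^+ N by apply: exprn_ge0.
  have : `|g ^+ N * Fv (rpi Rw pi) (mu *m Ppi T pi ^+ N)| <= g ^+ N * K.
    by rewrite normrM ger0_norm // ler_wpM2l.
  rewrite ler_norml => /andP[h1 h2].
  apply/andP; split; lra.
- rewrite -[X in _ --> X]subr0; apply: cvgB => //; exact: cvg_cst.
- rewrite -[X in _ --> X]addr0; apply: cvgD => //; exact: cvg_cst.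
Qed.

Lemma fixE (R : realType) (n : nat) (d mu : 'rV[R]_n) (P : 'M[R]_n) (g : R) j :
  mu = d + g *: (mu *m P) -> mu 0 j = d 0 j + g * \sum_i mu 0 i * P i j.
Proof. by move=> h; rewrite {1}h !mxE. Qed.

Lemma sum_ge_term (R : realType) (m : nat) (f : 'I_m -> R) a :
  (forall b, 0 <= f b) -> f a <= \sum_b f b.
Proof.
move=> h; rewrite (bigD1 a) //= lerDl; exact: sumr_ge0.
Qed.

Lemma ker_triv (R : realType) (n : nat) (P : 'M[R]_n) (g : R) (v : 'rV[R]_n) :
  stoch P -> 0 <= g -> g < 1 -> v *m (1%:M - g *: P) = 0 -> v = 0.
Proof.
move=> [P0 P1] g0 g1; rewrite mulmxBr mulmx1 -scalemxAr => /eqP; rewrite subr_eq0 => /eqP hv.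
have hS : \sum_j `|v 0 j| <= g * \sum_j `|v 0 j|.
  rewrite {1}hv.
  under eq_bigr => j _ do rewrite !mxE normrM (ger0_norm g0).
  rewrite -mulr_sumr ler_wpM2l //.
  apply: (@le_trans _ _ (\sum_j \sum_i `|v 0 i| * P i j)).
    apply: ler_sum => j _; apply: le_trans (ler_norm_sum _ _ _) _.
    by apply: ler_sum => i _; rewrite normrM (ger0_norm (P0 _ _)).
  rewrite exchange_big /=; apply: ler_sum => i _.
  by rewrite -mulr_sumr P1 mulr1.
have hS0 : 0 <= \sum_j `|v 0 j| by apply: sumr_ge0.
have hz : \sum_j `|v 0 j| = 0 by nra.
apply/rowP => j; rewrite mxE; apply/eqP; rewrite -normr_eq0 eq_le normr_ge0 andbT.
rewrite -hz; apply: sum_ge_term => i; exact: normr_ge0.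
Qed.

Lemma exists_mu (R : realType) (n : nat) (P : 'M[R]_n) (g : R) (d : 'rV[R]_n) :
  stoch P -> 0 <= g -> g < 1 -> exists mu, mu = d + g *: (mu *m P).
Proof.
move=> sP g0 g1; set A := 1%:M - g *: P.
have uA : A \in unitmx.
  rewrite -row_free_unit -kermx_eq0; apply/eqP/matrixP => i j.
  have := mulmx_ker A; move/(congr1 (row i)); rewrite row_mul row0.
  move/(ker_triv sP g0 g1) => h.
  by have := congr1 (fun M : 'rV_n => M 0 j) h; rewrite !mxE.
exists (d *m invmx A).
have : d *m invmx A *m A = d by rewrite -mulmxA mulVmx // mulmx1.
rewrite mulmxBr mulmx1 -scalemxAr => h.
by rewrite -{2}h subrK.
Qed.

Lemma mu_ge0 (R : realType) (n : nat) (P : 'M[R]_n) (g : R) (d mu : 'rV[R]_n) :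
  stoch P -> 0 <= g -> g < 1 -> (forall j, 0 <= d 0 j) ->
  mu = d + g *: (mu *m P) -> forall j, 0 <= mu 0 j.
Proof.
move=> [P0 P1] g0 g1 d0 hmu.
pose nu j := if 0 <= mu 0 j then 0 else mu 0 j.
have nu0 : forall j, nu j <= 0.
  by move=> j; rewrite /nu; case: ifP => // /negbT; rewrite -ltNge => /ltW.
have numu : forall j, nu j <= mu 0 j.
  by move=> j; rewrite /nu; case: ifP.
have hj : forall j, g * \sum_i nu i * P i j <= nu j.
  move=> j; have [hmj|hmj] := boolP (0 <= mu 0 j).
    have -> : nu j = 0 by rewrite /nu hmj.
    apply: mulr_ge0_le0 => //; rewrite -oppr_ge0 -sumrN; apply: sumr_ge0 => i _.
    by rewrite -mulNr; apply: mulr_ge0 => //; rewrite oppr_ge0.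
  have -> : nu j = mu 0 j by rewrite /nu (negbTE hmj).
  rewrite (fixE j hmu) -[X in X <= _]add0r; apply: lerD => //.
  apply: ler_wpM2l => //; apply: ler_sum => i _; apply: ler_wpM2r => //.
have hs : g * \sum_i nu i <= \sum_i nu i.
  apply: le_trans (ler_sum _ (fun j _ => hj j)).
  rewrite -mulr_sumr ler_wpM2l // exchange_big /=; apply: ler_sum => i _.
  by rewrite -mulr_sumr P1 mulr1.
have hs0 : \sum_i nu i <= 0 by rewrite -oppr_ge0 -sumrN; apply: sumr_ge0 => i _; rewrite oppr_ge0.
have hz : \sum_i nu i = 0 by nra.
move=> j; have : - nu j <= \sum_i - nu i.
  by apply: sum_ge_term => i; rewrite oppr_ge0.
rewrite sumrN hz oppr0 oppr_le0 => hnj.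
have : nu j = 0 by apply/eqP; rewrite eq_le hnj nu0.
rewrite /nu; case: ifP => // /negbT; rewrite -ltNge => h1 h2.
by move: h1; rewrite h2 ltxx.
Qed.

Lemma mu_gt0 (R : realType) (n m : nat) (d0 : 'I_n -> R) (T : 'I_n -> 'I_m -> 'I_n -> R)
  (pi : 'M[R]_(n, m)) (g : R) (mu : 'rV[R]_n) :
  is_transition T -> 0 < g -> g < 1 -> (forall s, 0 <= d0 s) -> (forall s a, 0 < pi s a) ->
  (forall s, \sum_(a < m) pi s a = 1) ->
  all_reachable d0 T -> mu = (\row_s d0 s) + g *: (mu *m Ppi T pi) -> forall s, 0 < mu 0 s.
Proof.
move=> hT g0 g1 hd pi0 pi1 hr hmu.
have sP : stoch (Ppi T pi) by apply: Ppi_stoch => // s a; exact: ltW.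
have [P0 P1] := sP.
have mu0 : forall j, 0 <= mu 0 j.
  by apply: (mu_ge0 sP (ltW g0) g1 _ hmu) => j; rewrite mxE.
have edge : forall x y, [exists a, 0 < T x a y] -> 0 < mu 0 x -> 0 < mu 0 y.
  move=> x y /existsP[a ha] hx.
  have hP : 0 < Ppi T pi x y.
    rewrite mxE; apply: (lt_le_trans _ (sum_ge_term a _)).
    - by apply: mulr_gt0; [exact: pi0 | exact: ha].
    - by move=> b; apply: mulr_ge0; [exact: ltW | case: (hT x b)].
  rewrite (fixE y hmu) mxE.
  have h1 : 0 < g * \sum_i mu 0 i * Ppi T pi i y.
    apply: mulr_gt0 => //; apply: (lt_le_trans _ (sum_ge_term x _)).
    + exact: mulr_gt0.
    + by move=> b; apply: mulr_ge0.
  have := hd y; lra.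
move=> s; have [s0 [hs0 /connectP [p hp ->]]] := hr s.
have ms0 : 0 < mu 0 s0.
  rewrite (fixE s0 hmu) mxE.
  have : 0 <= g * \sum_i mu 0 i * Ppi T pi i s0.
    by apply: mulr_ge0; [exact: ltW | apply: sumr_ge0 => i _; apply: mulr_ge0].
  lra.
elim: p s0 hp {hs0} ms0 => [|z p IH] x //= /andP[exz hp] hx.
by apply: IH hp _; apply: edge hx.
Qed.

Lemma connected_pairs (T : topologicalType) (A : set T) :
  (forall x y, A x -> A y -> exists C : set T, [/\ connected C, C `<=` A, C x & C y]) ->
  connected A.
Proof.
move=> h; have [[x Ax]|nA] := pselect (A !=set0); last first.
  have -> : A = set0 by apply/seteqP; split => // y Ay; apply: nA; exists y.
  exact: connected0.
have -> : A = connected_component A x.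
  apply/seteqP; split; last exact: connected_component_sub.
  move=> y Ay; have [C [cC CA Cx Cy]] := h x y Ax Ay.
  exact: (connected_component_max Cx CA cC).
exact: component_connected.
Qed.

Lemma mx_cont (R : realType) (n m : nat) (f : R -> 'M[R]_(n, m)) (t : R) :
  (forall i j, {for t, continuous (fun s => f s i j)}) -> {for t, continuous f}.
Proof.
move=> h A /= hA; rewrite /nbhs /= in hA; case: hA => P hP sPA.
have hn : \forall s \near t, forall i j, P i j (f s i j).
  apply: (@filter_forall _ 'I_n (fun i s => forall j, P i j (f s i j)) (nbhs t) _) => i.
  apply: (@filter_forall _ 'I_m (fun j s => P i j (f s i j)) (nbhs t) _) => j.
  exact: (h i j _ (hP i j)).
change (\forall s \near t, A (f s)).
by apply: filterS hn => s hs; apply: sPA.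
Qed.

Lemma cont_aff (R : realType) (a b : R) : continuous (fun s : R => (1 - s) * a + s * b).
Proof.
move=> x; apply: cvgD; apply: cvgM; try exact: cvg_cst; try exact: cvg_id.
apply: cvgB; [exact: cvg_cst | exact: cvg_id].
Qed.

Definition Kset (R : realType) (n m : nat) (d0 : 'I_n -> R) (Rw : 'I_n -> 'I_m -> R)
  (g : R) (T : 'I_n -> 'I_m -> 'I_n -> R) (c : R) (eta : 'M[R]_(n, m)) : Prop :=
  [/\ (forall s a, 0 < eta s a),
      (forall s', \sum_(a < m) eta s' a = d0 s' + g * \sum_(s < n) \sum_(a < m) T s a s' * eta s a)
    & \sum_(s < n) \sum_(a < m) eta s a * Rw s a = c].

Definition psi (R : realType) (n m : nat) (eta : 'M[R]_(n, m)) : 'M[R]_(n, m) :=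
  \matrix_(s, a) (eta s a / \sum_(b < m) eta s b).

Lemma K_to_L (R : realType) (n m : nat) (hm : (0 < m)%N) (d0 : 'I_n -> R) (Rw : 'I_n -> 'I_m -> R)
  (g : R) (T : 'I_n -> 'I_m -> 'I_n -> R) (c : R) (eta : 'M[R]_(n, m)) :
  0 <= g -> g < 1 -> is_transition T -> Kset d0 Rw g T c eta ->
  is_pos_policy (psi eta) /\ J d0 Rw g T (psi eta) = c.
Proof.
move=> g0 g1 hT [e0 eflow eval].
pose a0 : 'I_m := Ordinal hm.
have mpos : forall s, 0 < \sum_(b < m) eta s b.
  by move=> s; apply: (lt_le_trans (e0 s a0)); apply: sum_ge_term => b; exact: ltW.
have key : forall s a, (\sum_(b < m) eta s b) * psi eta s a = eta s a.
  by move=> s a; rewrite mxE mulrC divfK // gt_eqF.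
have pp : is_pos_policy (psi eta).
  split=> [s a|s]; first by rewrite mxE divr_gt0.
  under eq_bigr => a _ do rewrite mxE.
  by rewrite -mulr_suml divff // gt_eqF.
split=> //.
have [pp0 pp1] := pp.
have sP : stoch (Ppi T (psi eta)) by apply: Ppi_stoch => // s a; exact: ltW.
pose mu : 'rV[R]_n := \row_s \sum_(b < m) eta s b.
rewrite (@J_eq _ _ _ _ _ _ _ _ mu g0 g1 sP).
  rewrite /Fv /rpi -eval; apply: eq_bigr => s _; rewrite mxE mulr_sumr.
  by apply: eq_bigr => a _; rewrite mulrA key.
apply/rowP => s'; rewrite !mxE eflow; congr (_ + _ * _).
apply: eq_bigr => s _; rewrite !mxE mulr_sumr; apply: eq_bigr => a _.
by rewrite mulrA key mulrC.
Qed.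

Lemma L_to_K (R : realType) (n m : nat) (d0 : 'I_n -> R) (Rw : 'I_n -> 'I_m -> R)
  (g : R) (T : 'I_n -> 'I_m -> 'I_n -> R) (pi : 'M[R]_(n, m)) :
  is_dist d0 -> 0 < g -> g < 1 -> is_transition T -> all_reachable d0 T ->
  is_pos_policy pi -> exists eta, Kset d0 Rw g T (J d0 Rw g T pi) eta /\ psi eta = pi.
Proof.
move=> [hd _] g0 g1 hT hr [p0 p1].
have sP : stoch (Ppi T pi) by apply: Ppi_stoch => // s a; exact: ltW.
have [mu hmu] := exists_mu (\row_s d0 s) sP (ltW g0) g1.
have mu0 := mu_gt0 hT g0 g1 hd p0 p1 hr hmu.
exists (\matrix_(s, a) (pi s a * mu 0 s)); split; last first.
  apply/matrixP => s a; rewrite !mxE.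
  under eq_bigr => b _ do rewrite mxE.
  by rewrite -mulr_suml p1 mul1r mulfK // gt_eqF.
split.
- by move=> s a; rewrite mxE mulr_gt0.
- move=> s'; under eq_bigr => a _ do rewrite mxE.
  rewrite -mulr_suml p1 mul1r (fixE s' hmu) mxE; congr (_ + _ * _).
  apply: eq_bigr => s _; rewrite mxE mulr_sumr; apply: eq_bigr => a _.
  by rewrite mxE; ring.
- rewrite (J_eq Rw (ltW g0) g1 sP hmu) /Fv /rpi; apply: eq_bigr => s _.
  rewrite mulrC mulr_suml; apply: eq_bigr => a _; rewrite mxE; ring.
Qed.

Lemma Kconv (R : realType) (n m : nat) (d0 : 'I_n -> R) (Rw : 'I_n -> 'I_m -> R)
  (g : R) (T : 'I_n -> 'I_m -> 'I_n -> R) (c : R) (e1 e2 : 'M[R]_(n, m)) (t : R) :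
  Kset d0 Rw g T c e1 -> Kset d0 Rw g T c e2 -> 0 <= t <= 1 ->
  Kset d0 Rw g T c ((1 - t) *: e1 + t *: e2).
Proof.
move=> [p1 f1 v1] [p2 f2 v2] /andP[t0 t1].
have E : forall s a, ((1 - t) *: e1 + t *: e2) s a = (1 - t) * e1 s a + t * e2 s a.
  by move=> s a; rewrite !mxE.
split.
- move=> s a; rewrite E; have := p1 s a; have := p2 s a; nra.
- move=> s'; under eq_bigr => a _ do rewrite E.
  rewrite big_split /= -!mulr_sumr f1 f2.
  under [X in _ = _ + g * X]eq_bigr => s _ do (under eq_bigr => a _ do rewrite E).
  have -> : \sum_(s < n) \sum_(a < m) T s a s' * ((1 - t) * e1 s a + t * e2 s a) =
     (1 - t) * \sum_(s < n) \sum_(a < m) T s a s' * e1 s a +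
     t * \sum_(s < n) \sum_(a < m) T s a s' * e2 s a.
    rewrite !mulr_sumr -big_split; apply: eq_bigr => s _.
    rewrite !mulr_sumr -big_split; apply: eq_bigr => a _. rewrite /=; ring.
  ring.
- under eq_bigr => s _ do (under eq_bigr => a _ do rewrite E).
  have -> : \sum_(s < n) \sum_(a < m) ((1 - t) * e1 s a + t * e2 s a) * Rw s a =
     (1 - t) * \sum_(s < n) \sum_(a < m) e1 s a * Rw s a +
     t * \sum_(s < n) \sum_(a < m) e2 s a * Rw s a.
    rewrite !mulr_sumr -big_split; apply: eq_bigr => s _.
    rewrite !mulr_sumr -big_split; apply: eq_bigr => a _; rewrite /=; ring.
  rewrite v1 v2; ring.
Qed.

Lemma itv01 (R : realType) (t : R) : `[0, 1]%classic t -> 0 <= t <= 1.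
Proof. by rewrite /= in_itv. Qed.

Lemma itv01' (R : realType) (t : R) : 0 <= t <= 1 -> `[0, 1]%classic t.
Proof. by rewrite /= in_itv. Qed.

Lemma J_g0 (R : realType) (n m : nat) (d0 : 'I_n -> R) (Rw : 'I_n -> 'I_m -> R)
  (T : 'I_n -> 'I_m -> 'I_n -> R) (pi : 'M[R]_(n, m)) :
  is_transition T -> (forall s a, 0 <= pi s a) -> (forall s, \sum_(a < m) pi s a = 1) ->
  J d0 Rw 0 T pi = \sum_s d0 s * \sum_(a < m) pi s a * Rw s a.
Proof.
move=> hT p0 p1; have sP := Ppi_stoch hT p0 p1.
rewrite (@J_eq _ _ _ d0 Rw 0 T pi (\row_s d0 s) (lexx 0) ltr01 sP).
  by rewrite /Fv /rpi; apply: eq_bigr => s _; rewrite mxE.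
by rewrite scale0r addr0.
Qed.

Lemma path_conn (R : realType) (n m : nat) (p : R -> 'M[R]_(n, m)) :
  (forall t, 0 <= t <= 1 -> {for t, continuous p}) ->
  connected (p @` `[0, 1]%classic).
Proof.
move=> hp; apply: connected_continuous_connected; first exact: segment_connected.
apply: continuous_in_subspaceT => t; rewrite inE => /itv01 ht; exact: hp.
Qed.

Lemma cont_ratio (R : realType) (a b X Y : R) t :
  0 < X -> 0 < Y -> 0 <= t <= 1 ->
  {for t, continuous (fun s : R => ((1 - s) * a + s * b) / ((1 - s) * X + s * Y))}.
Proof.
move=> X0 Y0 /andP[t0 t1].
apply: (@continuousM _ _ (fun s : R => (1 - s) * a + s * b) (fun s : R => ((1 - s) * X + s * Y)^-1)).
  exact: cont_aff.
apply: continuousV; last exact: cont_aff.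
apply/negP => /eqP; nra.
Qed.

Unset Implicit Arguments.

Theorem mainTheorem8 (R : realType) (n m : nat) (hm : (1 < m)%N)
  (d0 : 'I_n -> R) (Rw : 'I_n -> 'I_m -> R) (gamma : R)
  (hd0 : is_dist d0) (hg0 : 0 <= gamma) (hg1 : gamma < 1)
  (T : 'I_n -> 'I_m -> 'I_n -> R) (hT : is_transition T)
  (hreach : all_reachable d0 T) (c : R) :
  connected [set pi : 'M[R]_(n, m) | is_pos_policy pi /\ J d0 Rw gamma T pi = c].
Proof.
have hm0 : (0 < m)%N by apply: ltn_trans hm.
apply: connected_pairs => p1 p2 [[pp1 ps1] J1] [[pp2 ps2] J2].
have [g0|gpos] := eqVneq gamma 0.
  subst gamma.
  pose q := fun t : R => (1 - t) *: p1 + t *: p2.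
  have qE : forall t s a, q t s a = (1 - t) * p1 s a + t * p2 s a.
    by move=> t s a; rewrite !mxE.
  exists (q @` `[0, 1]%classic); split.
  - apply: path_conn => t _; apply: mx_cont => i j.
    have -> : (fun s => q s i j) = (fun s => (1 - s) * p1 i j + s * p2 i j).
      by apply: funext => s; rewrite qE.
    exact: cont_aff.
  - move=> _ [t /itv01 /andP[t0 t1] <-].
    have qp : forall s a, 0 < q t s a.
      by move=> s a; rewrite qE; have := pp1 s a; have := pp2 s a; nra.
    have qs : forall s, \sum_(a < m) q t s a = 1.
      move=> s; under eq_bigr => a _ do rewrite qE.
      by rewrite big_split /= -!mulr_sumr ps1 ps2; ring.
    split; first by split.
    rewrite J_g0 //; last by move=> s a; exact: ltW.
    rewrite (J_g0 d0 Rw hT (fun s a => ltW (pp1 s a)) ps1) in J1.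
    rewrite (J_g0 d0 Rw hT (fun s a => ltW (pp2 s a)) ps2) in J2.
    have -> : \sum_s d0 s * \sum_(a < m) q t s a * Rw s a =
       (1 - t) * \sum_s d0 s * \sum_(a < m) p1 s a * Rw s a +
       t * \sum_s d0 s * \sum_(a < m) p2 s a * Rw s a.
      rewrite !mulr_sumr -big_split; apply: eq_bigr => s _ /=.
      have -> : \sum_(a < m) q t s a * Rw s a = (1 - t) * \sum_(a < m) p1 s a * Rw s a
          + t * \sum_(a < m) p2 s a * Rw s a.
        by rewrite !mulr_sumr -big_split; apply: eq_bigr => a _ /=; rewrite qE; ring.
      ring.
    rewrite J1 J2; ring.
  - by exists 0; [apply: itv01'; rewrite lexx ler01 | rewrite /q subr0 scale1r scale0r addr0].
  - by exists 1; [apply: itv01'; rewrite lexx ler01 | rewrite /q subrr scale0r scale1r add0r].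
have g0 : 0 < gamma by rewrite lt_neqAle eq_sym gpos hg0.
have [e1 [K1 <-]] := L_to_K Rw hd0 g0 hg1 hT hreach (conj pp1 ps1).
have [e2 [K2 <-]] := L_to_K Rw hd0 g0 hg1 hT hreach (conj pp2 ps2).
rewrite J1 in K1; rewrite J2 in K2.
pose q := fun t : R => psi ((1 - t) *: e1 + t *: e2).
exists (q @` `[0, 1]%classic); split.
- apply: path_conn => t ht; apply: mx_cont => i j.
  have [p1e _ _] := K1; have [p2e _ _] := K2.
  have -> : (fun s => q s i j) = (fun s => ((1 - s) * e1 i j + s * e2 i j) /
        ((1 - s) * (\sum_(b < m) e1 i b) + s * (\sum_(b < m) e2 i b))).
    apply: funext => s; rewrite /q /psi !mxE.
    under eq_bigr => b _ do rewrite !mxE.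
    by rewrite big_split /= -!mulr_sumr.
  apply: cont_ratio => //.
    by apply: (lt_le_trans (p1e i (Ordinal hm0))); apply: sum_ge_term => b; exact: ltW.
  by apply: (lt_le_trans (p2e i (Ordinal hm0))); apply: sum_ge_term => b; exact: ltW.
- move=> _ [t /itv01 ht <-].
  exact: (K_to_L hm0 hg0 hg1 hT (Kconv K1 K2 ht)).
- by exists 0; [apply: itv01'; rewrite lexx ler01 | rewrite /q subr0 scale1r scale0r addr0].
- by exists 1; [apply: itv01'; rewrite lexx ler01 | rewrite /q subrr scale0r scale1r add0r].
Qed.
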